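(* Let $X$ be a spatially independent random subcomplex of $\triangle_n$. Then for every $Y\in S_n$ and all $Z_1\subset Z_2$ in $S_n$ with $\mathbb{P}(Z_2\subset X)>0$, \[ \mathbb{P}(Y\subset X\mid Z_1\subset X)\le\mathbb{P}(Y\subset X\mid Z_2\subset X). \]
   Context: $\triangle_n=2^{[n]}$; $S_n$ is the set of subcomplexes of $\triangle_n$ (families of subsets of $[n]$ closed under taking subsets); a random subcomplex is an $S_n$-valued random variable. $X$ is spatially independent if $\mathbb{P}(Y_1\cup Y_2\subset X)\,\mathbb{P}(Y_1\cap Y_2\subset X)=\mathbb{P}(Y_1\subset X)\,\mathbb{P}(Y_2\subset X)$ for all $Y_1,Y_2\in S_n$. *)

(* Defs.v *)
From HB Require Import structures.
From mathcomp Require Import all_boot all_order all_algebra.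
Set Implicit Arguments. Unset Strict Implicit. Unset Printing Implicit Defensive.
Import Order.TTheory GRing.Theory Num.Theory.
Local Open Scope ring_scope.

(* Vertex set [n] is 'I_n; the full simplex triangle_n = 2^[n] is {set 'I_n}. *)
Definition is_complex (n : nat) (K : {set {set 'I_n}}) : bool :=
  [forall s : {set 'I_n}, forall t : {set 'I_n},
     (s \in K) && (t \subset s) ==> (t \in K)].

Definition Sn (n : nat) := {K : {set {set 'I_n}} | is_complex K}.

(* A random subcomplex X: a probability distribution mu on S_n
   (values in a real field R). *)
Definition is_distr (R : realFieldType) (n : nat) (mu : Sn n -> R) : Prop :=
  (forall K, 0 <= mu K) /\ \sum_(K : Sn n) mu K = 1.

Definition PrSub (R : realFieldType) (n : nat) (mu : Sn n -> R)
  (Y : {set {set 'I_n}}) : R :=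
  \sum_(K : Sn n | Y \subset val K) mu K.

Definition CondPrSub (R : realFieldType) (n : nat) (mu : Sn n -> R)
  (Y Z : {set {set 'I_n}}) : R :=
  (\sum_(K : Sn n | (Y \subset val K) && (Z \subset val K)) mu K) / PrSub mu Z.

Definition spatially_independent (R : realFieldType) (n : nat) (mu : Sn n -> R)
  : Prop :=
  forall Y1 Y2 : Sn n,
    PrSub mu (val Y1 :|: val Y2) * PrSub mu (val Y1 :&: val Y2)
    = PrSub mu (val Y1) * PrSub mu (val Y2).

(* Main.v *)
Require Import Defs.
From HB Require Import structures.
From mathcomp Require Import all_boot all_order all_algebra.
Import Order.TTheory GRing.Theory Num.Theory.
Local Open Scope ring_scope.

Lemma complexU (n : nat) (A B : Sn n) : is_complex (val A :|: val B).
Proof.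
apply/forallP => s; apply/forallP => t; apply/implyP => /andP [].
rewrite !inE => /orP [] hs ht.
- have := valP A => /forallP /(_ s) /forallP /(_ t) /implyP.
  by rewrite hs ht => /(_ isT) ->.
- have := valP B => /forallP /(_ s) /forallP /(_ t) /implyP.
  by rewrite hs ht => /(_ isT) ->; rewrite orbT.
Qed.

Lemma PrSub_mono (R : realFieldType) (n : nat) (mu : Sn n -> R)
  (Hmu : is_distr mu) (S T : {set {set 'I_n}}) :
  S \subset T -> PrSub mu T <= PrSub mu S.
Proof.
move=> hST; rewrite /PrSub.
rewrite [leRHS](bigID (fun K : Sn n => T \subset val K)) /=.
have -> : \sum_(K : Sn n | (S \subset val K) && (T \subset val K)) mu K =
          \sum_(K : Sn n | T \subset val K) mu K.
  apply: eq_bigl => K; case hT: (T \subset val K); rewrite ?andbF //.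
  by rewrite (subset_trans hST hT).
rewrite lerDl; apply: sumr_ge0 => K _; exact: Hmu.1.
Qed.

Lemma numE (R : realFieldType) (n : nat) (mu : Sn n -> R)
  (Y Z : {set {set 'I_n}}) :
  \sum_(K : Sn n | (Y \subset val K) && (Z \subset val K)) mu K =
  PrSub mu (Y :|: Z).
Proof. by rewrite /PrSub; apply: eq_bigl => K; rewrite subUset. Qed.

Theorem mainTheorem7 (R : realFieldType) (n : nat) (mu : Sn n -> R)
  (Hmu : is_distr mu) (Hind : spatially_independent mu)
  (Y Z1 Z2 : Sn n) (HZ : val Z1 \subset val Z2)
  (Hpos : 0 < PrSub mu (val Z2)) :
  CondPrSub mu (val Y) (val Z1) <= CondPrSub mu (val Y) (val Z2).
Proof.
rewrite /CondPrSub !numE.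
set A : Sn n := exist (fun K => is_complex K) _ (@complexU n Y Z1).
have := Hind A Z2; rewrite /A /=.
have -> : val Y :|: val Z1 :|: val Z2 = val Y :|: val Z2.
  by rewrite -setUA (setUidPr HZ).
set W := (val Y :|: val Z1) :&: val Z2 => Hi.
have hWZ1 : PrSub mu W <= PrSub mu (val Z1).
  by apply: PrSub_mono => //; rewrite /W setIUl subsetU // orbC (setIidPl HZ) subxx.
have hZ2W : PrSub mu (val Z2) <= PrSub mu W.
  by apply: PrSub_mono => //; rewrite /W subsetIr.
have p1 : 0 < PrSub mu (val Z1) by apply: (lt_le_trans Hpos); exact: le_trans hZ2W hWZ1.
have p0 : 0 <= PrSub mu (val Y :|: val Z2).
  rewrite /PrSub; apply: sumr_ge0 => K _; exact: Hmu.1.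
rewrite ler_pdivrMr // mulrAC ler_pdivlMr //.
rewrite -Hi; exact: ler_wpM2l.
Qed.
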